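(* Let $q=2^m$ with $m$ a positive integer, let $b\in\mathbb{F}_q^*$ and $\delta\in\mathbb{F}_{q^2}\setminus\mathbb{F}_q$. Put $$A=b\,\mathrm{Tr}_{q^2/q}(\delta),\quad B=b\,\delta^{2q+2}\mathrm{Tr}_{q^2/q}(\delta),\quad C=\mathrm{Tr}_{q^2/q}(\delta)^2,\quad D=1/A,$$ and define $S_{-1}=0$, $S_0=1$, $S_i=C^{2^{i-1}}S_{i-1}+D^{2^{i-1}}S_{i-2}$ for $i\geq1$. If the polynomial $$P(x)=b(x^q+x+\delta)^{2q+3}+x$$ permutes $\mathbb{F}_{q^2}$, then its compositional inverse over $\mathbb{F}_{q^2}$ is $$P^{-1}(x)=x+b\left(\delta+\sum_{i=0}^{m-1}\left(D^{2^i}S_{m-2-i}^{2^{i+1}}+D^{1-2^{i}}S_i\right)\left(x^q+x+B\right)^{2^i}\right)^{2q+3}.$$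
   Context: $\mathrm{Tr}_{q^2/q}(y)=y+y^q$. The compositional inverse of a permutation polynomial $f$ of $\mathbb{F}_{Q}$ is the unique polynomial $f^{-1}$ (modulo $x^Q-x$) with $f(f^{-1}(c))=f^{-1}(f(c))=c$ for all $c\in\mathbb{F}_Q$. *)

(* Defs.v *)
From mathcomp Require Import all_boot all_algebra all_field.
Set Implicit Arguments. Unset Strict Implicit. Unset Printing Implicit Defensive.
Import GRing.Theory.
Local Open Scope ring_scope.

Definition Tr (F : fieldType) (q : nat) (y : F) : F := y + y ^+ q.

(* Shifted sequence: Sh n = S_{n-1}, i.e. Sh 0 = S_{-1} = 0, Sh 1 = S_0 = 1,
   Sh (n+2) = S_{n+1} = C^{2^n} S_n + D^{2^n} S_{n-1}. *)
Fixpoint Sh (F : fieldType) (C D : F) (n : nat) : F :=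
  match n with
  | 0 => 0
  | S 0 => 1
  | S ((S n'') as n') => C ^+ (2 ^ n'') * Sh C D n' + D ^+ (2 ^ n'') * Sh C D n''
  end.

(* Main.v *)
Require Import Defs.
From mathcomp Require Import all_boot all_algebra all_field.
From mathcomp Require Import ring zify.
Import GRing.Theory.
Local Open Scope ring_scope.
Set Implicit Arguments. Unset Strict Implicit.

Lemma c2_addxx (F : fieldType) (h2 : 2%:R = 0 :> F) (x : F) : x + x = 0.
Proof. by rewrite -mulr2n -mulr_natr h2 mulr0. Qed.

Lemma c2_eq (F : fieldType) (h2 : 2%:R = 0 :> F) (x y e : F) :
  x = y + 2%:R * e -> x = y.
Proof. by rewrite h2 mul0r addr0. Qed.

Lemma c2_sqrD (F : fieldType) (h2 : 2%:R = 0 :> F) (x y : F) :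
  (x + y) ^+ 2 = x ^+ 2 + y ^+ 2.
Proof. by rewrite sqrrD -mulr_natr h2 mulr0 addr0. Qed.

Lemma c2_frobD_aux (F : fieldType) (x y : F) : x = x.
Proof. by []. Qed.

Lemma c2_frobD (F : fieldType) (h2 : 2%:R = 0 :> F) k (x y : F) :
  (x + y) ^+ (2 ^ k) = x ^+ (2 ^ k) + y ^+ (2 ^ k).
Proof.
elim: k => [|k IH]; first by rewrite !expr1.
by rewrite expnS mulnC !exprM IH (c2_sqrD h2).
Qed.

Lemma c2_frob_sum (F : fieldType) (h2 : 2%:R = 0 :> F) k n (f : 'I_n -> F) :
  (\sum_(i < n) f i) ^+ (2 ^ k) = \sum_(i < n) f i ^+ (2 ^ k).
Proof.
apply: (big_morph (fun x : F => x ^+ (2 ^ k))).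
- by move=> x y; rewrite c2_frobD.
- by rewrite expr0n expn_eq0.
Qed.

Lemma exprXX (F : fieldType) (x : F) i j : (x ^+ (2 ^ i)) ^+ (2 ^ j) = x ^+ (2 ^ (i + j)).
Proof. by rewrite -exprM -expnD. Qed.

Lemma ShSS (F : fieldType) (C D : F) k :
  Sh C D k.+2 = C ^+ (2 ^ k) * Sh C D k.+1 + D ^+ (2 ^ k) * Sh C D k.
Proof. by []. Qed.

Definition bb (F : fieldType) (C D : F) k :=
  match k with 0 => 1 | k'.+1 => D * Sh C D k' ^+ 2 end.

Definition NN (F : fieldType) (C D x : F) := x ^+ 4 + C * x ^+ 2 + D * x.

Fixpoint QQ (F : fieldType) (C D : F) k (y : F) : F :=
  match k with 0 => 0 | k'.+1 => QQ C D k' y ^+ 2 + Sh C D k' ^+ 2 * y end.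

Lemma c2_pow4 (F : fieldType) (h2 : 2%:R = 0 :> F) (x y : F) :
  (x + y) ^+ 4 = x ^+ 4 + y ^+ 4.
Proof. exact: (c2_frobD h2 2). Qed.

Lemma alg1 (F : fieldType) (h2 : 2%:R = 0 :> F) (C D c0 d0 S0 S1 S2 : F) :
  c0 ^+ 2 ^+ 2 * (C * S2 ^+ 2 + D ^+ 2 * S1 ^+ 4) + d0 ^+ 2 ^+ 2 * (C * S1 ^+ 2 + D ^+ 2 * S0 ^+ 4)
  = C * (c0 ^+ 2 * S2 + d0 ^+ 2 * S1) ^+ 2 + D ^+ 2 * (c0 * S1 + d0 * S0) ^+ 4.
Proof. rewrite (c2_sqrD h2) (c2_pow4 h2); ring. Qed.

Lemma L1' (F : fieldType) (h2 : 2%:R = 0 :> F) (C D : F) k :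
  Sh C D k.+2 = C * Sh C D k.+1 ^+ 2 + D ^+ 2 * Sh C D k ^+ 4.
Proof.
suff: forall k, Sh C D k.+2 = C * Sh C D k.+1 ^+ 2 + D ^+ 2 * Sh C D k ^+ 4 /\
   Sh C D k.+3 = C * Sh C D k.+2 ^+ 2 + D ^+ 2 * Sh C D k.+1 ^+ 4 by move=> H; case: (H k).
clear k.
elim=> [|k [IH1 IH2]].
  by split; rewrite /= ?expr1n; ring.
split=> //.
have E : Sh C D k.+4 = C ^+ (2 ^ k) ^+ 2 ^+ 2 * (C * Sh C D k.+2 ^+ 2 + D ^+ 2 * Sh C D k.+1 ^+ 4)
   + D ^+ (2 ^ k) ^+ 2 ^+ 2 * (C * Sh C D k.+1 ^+ 2 + D ^+ 2 * Sh C D k ^+ 4).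
  by rewrite -IH1 -IH2 ShSS !expnSr !exprM.
rewrite E alg1 // [Sh C D k.+3]ShSS [Sh C D k.+2]ShSS.
by rewrite !expnSr !exprM.
Qed.

Lemma L1 (F : fieldType) (h2 : 2%:R = 0 :> F) (C D : F) k :
  Sh C D k.+1 = C * Sh C D k ^+ 2 + bb C D k ^+ 2.
Proof.
case: k => [|k]; first by rewrite /= expr0n mulr0 add0r expr1n.
by rewrite (L1' h2) /= exprMn -exprM.
Qed.

Lemma Rem (F : fieldType) (h2 : 2%:R = 0 :> F) (C D : F) k (x : F) :
  x ^+ (2 ^ k) = QQ C D k (NN C D x) + Sh C D k * x ^+ 2 + bb C D k * x.
Proof.
elim: k => [|k IH]; first by rewrite /= expr1; ring.
rewrite expnSr exprM IH (L1 h2) /= /NN.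
rewrite !(c2_sqrD h2) !exprMn.
set S := Sh C D k; set b := bb C D k; set Q := QQ C D k _.
apply: (c2_eq h2 (e := - (S ^+ 2 * C * x ^+ 2 + S ^+ 2 * D * x))).
ring.
Qed.

Lemma bbS (F : fieldType) (C D : F) k : bb C D k.+1 = D * Sh C D k ^+ 2.
Proof. by []. Qed.

Lemma shift (F : fieldType) (h2 : 2%:R = 0 :> F) (C D : F) n k :
  Sh C D (n + k) = Sh C D n ^+ (2 ^ k) * Sh C D k.+1 + bb C D n ^+ (2 ^ k) * Sh C D k /\
  bb C D (n + k) = Sh C D n ^+ (2 ^ k) * bb C D k.+1 + bb C D n ^+ (2 ^ k) * bb C D k.
Proof.
elim: k => [|k [IH1 IH2]].
  by rewrite addn0 /= !expr1 expr0n /=; split; ring.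
rewrite addnS (L1 h2 C D (n + k)) bbS IH1 IH2 !expnSr !exprM.
set u := Sh C D n ^+ (2 ^ k); set v := bb C D n ^+ (2 ^ k).
split.
  transitivity (u ^+ 2 * (C * Sh C D k.+1 ^+ 2 + bb C D k.+1 ^+ 2)
     + v ^+ 2 * (C * Sh C D k ^+ 2 + bb C D k ^+ 2)).
    by rewrite !(c2_sqrD h2) !exprMn; ring.
  by rewrite -!(L1 h2).
transitivity (u ^+ 2 * (D * Sh C D k.+1 ^+ 2) + v ^+ 2 * (D * Sh C D k ^+ 2)).
  by rewrite !(c2_sqrD h2) !exprMn; ring.
by rewrite -!bbS.
Qed.


Lemma Rb (F : fieldType) (h2 : 2%:R = 0 :> F) (C D : F) k :
  bb C D k.+2 = C ^+ (2 ^ k) * bb C D k.+1 + D ^+ (2 ^ k) * bb C D k.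
Proof.
case: k => [|k].
  by rewrite /= !expr1 expr1n expr0n /=; ring.
rewrite !bbS ShSS (c2_sqrD h2) !exprMn !expnSr !exprM; ring.
Qed.

Lemma detS (F : fieldType) (h2 : 2%:R = 0 :> F) (C D : F) k :
  (Sh C D k.+1 * bb C D k + bb C D k.+1 * Sh C D k) * D = D ^+ (2 ^ k).
Proof.
elim: k => [|k IH]; first by rewrite /= expr0n expr1 /=; ring.
have hb : bb C D k ^+ 2 = Sh C D k.+1 + C * Sh C D k ^+ 2.
  rewrite (L1 h2).
  apply: (c2_eq h2 (e := - (C * Sh C D k ^+ 2))); ring.
rewrite expnSr exprM -IH (L1 h2 C D k.+1) !bbS.
rewrite !exprMn (c2_sqrD h2) !exprMn hb.
ring.
Qed.

Fixpoint RG (F : fieldType) (g : nat -> F) k (y : F) : F :=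
  match k with 0 => 0 | k'.+1 => RG g k' y ^+ 2 + g k' ^+ 2 * y end.

Lemma Qshift (F : fieldType) (h2 : 2%:R = 0 :> F) (C D : F) n k y :
  QQ C D (n + k) y = QQ C D n y ^+ (2 ^ k) + RG (fun j => Sh C D (n + j)) k y.
Proof.
elim: k => [|k IH]; first by rewrite addn0 expr1 /= addr0.
by rewrite addnS /= IH (c2_sqrD h2) expnSr exprM addrA.
Qed.

Lemma RGclosed (F : fieldType) (h2 : 2%:R = 0 :> F) (g : nat -> F) k y :
  RG g k y = \sum_(i < k) g (k - i.+1)%N ^+ (2 ^ i.+1) * y ^+ (2 ^ i).
Proof.
elim: k => [|k IH]; first by rewrite big_ord0.
rewrite /= IH big_ord_recl /= subn1 /= expn0 expr1 addrC.
congr (_ + _).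
rewrite (c2_frob_sum h2 1).
apply: eq_bigr => i _.
by rewrite subSS exprMn -!exprM -!expnSr.
Qed.

Fixpoint QP (F : fieldType) (C D : F) k : {poly F} :=
  match k with 0 => 0 | k'.+1 => QP C D k' ^+ 2 + (Sh C D k' ^+ 2) *: 'X end.

Lemma hornerQP (F : fieldType) (C D : F) k y : (QP C D k).[y] = QQ C D k y.
Proof.
elim: k => [|k IH]; first by rewrite /= horner0.
by rewrite /= hornerD hornerZ hornerX -IH expr2 hornerM expr2.
Qed.

Lemma QP_monic (F : fieldType) (C D : F) k :
  QP C D k.+2 \is monic /\ size (QP C D k.+2) = (2 ^ k).+1.
Proof.
elim: k => [|k [IH1 IH2]].
  rewrite /= expr0n /= expr1n scale1r expr0n /= !scale0r !add0r.
  by rewrite expr0n add0r monicX size_polyX.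
have hs : (size ((Sh C D k.+2 ^+ 2) *: ('X : {poly F})) < size (QP C D k.+2 ^+ 2))%N.
  have := size_exp (QP C D k.+2) 2; rewrite IH2 /=.
  have : (size (QP C D k.+2 ^+ 2) != 0)%N.
    by rewrite size_poly_eq0 expf_neq0 // monic_neq0.
  case: (size _) => // s _ /= ->.
  apply: (leq_ltn_trans (size_scale_leq _ _)).
  rewrite size_polyX ltnS; apply: (@leq_trans (1 * 2)%N) => //.
  by rewrite leq_mul2r /= expn_gt0.
split.
  by rewrite [QP _ _ k.+3]/= monicE lead_coefDl // -monicE monic_exp.
rewrite [QP _ _ k.+3]/= size_polyDl //.
have := size_exp (QP C D k.+2) 2; rewrite IH2 /=.
have : (size (QP C D k.+2 ^+ 2) != 0)%N.
  by rewrite size_poly_eq0 expf_neq0 // monic_neq0.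
case: (size _) => // s _ /= ->.
by rewrite expnSr.
Qed.

Lemma c2_addeq (F : fieldType) (h2 : 2%:R = 0 :> F) (x y : F) : x + y = 0 -> x = y.
Proof. by move=> H; rewrite -[x]addr0 -(c2_addxx h2 y) addrA H add0r. Qed.

Lemma fqD (F : fieldType) (h2 : 2%:R = 0 :> F) m (x y : F) :
  x ^+ (2 ^ m) = x -> y ^+ (2 ^ m) = y -> (x + y) ^+ (2 ^ m) = x + y.
Proof. by move=> hx hy; rewrite (c2_frobD h2) hx hy. Qed.

Lemma fqM (F : fieldType) m (x y : F) :
  x ^+ (2 ^ m) = x -> y ^+ (2 ^ m) = y -> (x * y) ^+ (2 ^ m) = x * y.
Proof. by move=> hx hy; rewrite exprMn hx hy. Qed.

Lemma fqX (F : fieldType) m n (x : F) :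
  x ^+ (2 ^ m) = x -> (x ^+ n) ^+ (2 ^ m) = x ^+ n.
Proof. by move=> hx; rewrite exprAC hx. Qed.

Lemma ShFq (F : fieldType) (h2 : 2%:R = 0 :> F) m (C D : F) :
  C ^+ (2 ^ m) = C -> D ^+ (2 ^ m) = D -> forall j, Sh C D j ^+ (2 ^ m) = Sh C D j.
Proof.
move=> hC hD.
suff: forall j, Sh C D j ^+ (2 ^ m) = Sh C D j /\ Sh C D j.+1 ^+ (2 ^ m) = Sh C D j.+1.
  by move=> H j; case: (H j).
elim=> [|j [IH1 IH2]].
  by rewrite /= expr0n expn_eq0 expr1n.
split=> //.
rewrite ShSS (fqD h2) //; apply: fqM => //; exact: fqX.
Qed.

Lemma bbFq (F : fieldType) (h2 : 2%:R = 0 :> F) m (C D : F) :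
  C ^+ (2 ^ m) = C -> D ^+ (2 ^ m) = D -> forall j, bb C D j ^+ (2 ^ m) = bb C D j.
Proof.
move=> hC hD [|j]; first by rewrite /= expr1n.
rewrite bbS fqM // fqX //; exact: ShFq.
Qed.

Lemma NNFq (F : fieldType) (h2 : 2%:R = 0 :> F) m (C D x : F) :
  C ^+ (2 ^ m) = C -> D ^+ (2 ^ m) = D -> x ^+ (2 ^ m) = x -> NN C D x ^+ (2 ^ m) = NN C D x.
Proof.
move=> hC hD hx; rewrite /NN !(fqD h2) // ?fqM // ?fqX //.
Qed.

Lemma QQFq (F : fieldType) (h2 : 2%:R = 0 :> F) m (C D y : F) :
  C ^+ (2 ^ m) = C -> D ^+ (2 ^ m) = D -> y ^+ (2 ^ m) = y ->
  forall k, QQ C D k y ^+ (2 ^ m) = QQ C D k y.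
Proof.
move=> hC hD hy; elim=> [|k IH]; first by rewrite /= expr0n expn_eq0.
rewrite /= (fqD h2) ?fqX // fqM // fqX //; exact: ShFq.
Qed.

Lemma NN_add (F : fieldType) (h2 : 2%:R = 0 :> F) (C D x y : F) :
  NN C D (x + y) = NN C D x + NN C D y.
Proof. by rewrite /NN (c2_pow4 h2) (c2_sqrD h2); ring. Qed.

Lemma NN_frob (F : fieldType) (h2 : 2%:R = 0 :> F) m (C D x : F) :
  C ^+ (2 ^ m) = C -> D ^+ (2 ^ m) = D -> NN C D (x ^+ (2 ^ m)) = NN C D x ^+ (2 ^ m).
Proof.
move=> hC hD; rewrite /NN !(c2_frobD h2) [(C * _) ^+ _]exprMn [(D * _) ^+ _]exprMn hC hD.
by rewrite ![_ ^+ (2 ^ m) ^+ _]exprAC.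
Qed.

Lemma key (F : finFieldType) (h2 : 2%:R = 0 :> F) m (C D : F) :
  (0 < m)%N -> #|F| = ((2 ^ m) ^ 2)%N -> C ^+ (2 ^ m) = C -> D ^+ (2 ^ m) = D -> D != 0 ->
  (forall t, t ^+ (2 ^ m) = t -> NN C D t = 0 -> t = 0) ->
  [/\ Sh C D (m + m) = Sh C D m, bb C D (m + m) = 1 + bb C D m & Sh C D m.+1 + bb C D m = 1].
Proof.
move=> m0 hcard hC hD hD0 hker.
have hq : forall x : F, x ^+ (2 ^ (m + m)) = x.
  by move=> x; rewrite expnD -{2}(expn1 (2 ^ m)) -expnS -hcard expf_card.
have hdet : Sh C D m.+1 * bb C D m + bb C D m.+1 * Sh C D m = 1.
  by apply: (mulIf hD0); rewrite (detS h2) hD mul1r.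
have hR : Sh C D m.+1 ^+ 2 = C * Sh C D m ^+ 2 + bb C D m.
  have := Rb h2 C D m; rewrite hC hD !bbS => H.
  apply: (mulfI hD0); rewrite H; ring.
set tau := Sh C D m.+1 + bb C D m.
have htau : tau ^+ 2 = tau.
  by rewrite /tau (c2_sqrD h2) hR [Sh C D m.+1](L1 h2); ring.
have [hs1 hs2] := shift h2 C D m m.
rewrite (ShFq h2 hC hD) (bbFq h2 hC hD) in hs1 hs2.
have e1 : Sh C D (m + m) = tau * Sh C D m by rewrite hs1 /tau; ring.
have e2 : bb C D (m + m) = 1 + tau * bb C D m.
  rewrite hs2 -hdet /tau.
  by apply: (c2_eq h2 (e := - (Sh C D m.+1 * bb C D m))); ring.
have : tau * (tau - 1) = 0 by rewrite mulrBr mulr1 -expr2 htau subrr.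
move/eqP; rewrite mulf_eq0 subr_eq0 => /orP[/eqP t0|/eqP t1]; last first.
  by split; rewrite ?e1 ?e2 -?t1 ?t1 ?mul1r.
exfalso.
rewrite t0 mul0r in e1; rewrite t0 mul0r addr0 in e2.
have hQ : forall x, QQ C D (m + m) (NN C D x) = 0.
  move=> x; have := Rem h2 C D (m + m) x; rewrite hq e1 e2 mul0r addr0 mul1r.
  by move/eqP; rewrite -subr_eq subrr eq_sym => /eqP.
have [x xnz Nx] : exists2 x, x != 0 & NN C D x = 0.
  case: (boolP [exists x, (x != 0) && (NN C D x == 0)]).
    by case/existsP=> x /andP[? /eqP]; exists x.
  move/existsPn => H.
  have inj : injective (NN C D).
    move=> x y hxy; apply: (c2_addeq h2).
    have := H (x + y); rewrite (NN_add h2) hxy (c2_addxx h2) eqxx andbT.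
    by move/negbNE/eqP.
  have [g gK Kg] := injF_bij inj.
  have hall : forall z, QQ C D (m + m) z = 0 by move=> z; rewrite -(Kg z) hQ.
  have mm : (m + m = (m + m - 2).+2)%N by lia.
  have [pm ps] := QP_monic C D (m + m - 2).
  have := max_poly_roots (monic_neq0 pm) _ (enum_uniq F).
  rewrite -cardT ps hcard -mm.
  have -> : all (root (QP C D (m + m))) (enum F).
    by apply/allP => z _; rewrite /root hornerQP hall.
  move/(_ isT).
  have : (0 < 2 ^ (m + m - 2))%N by rewrite expn_gt0.
  have -> : ((2 ^ m) ^ 2 = 2 ^ (m + m - 2) * 2 ^ 2)%N.
    by rewrite -expnM -expnD; apply: f_equal; lia.
  move=> h1 h3; exfalso; lia.
case: (eqVneq (x ^+ (2 ^ m)) x) => hx.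
  by move: xnz; rewrite (hker x hx Nx) eqxx.
have hw : (x + x ^+ (2 ^ m)) ^+ (2 ^ m) = x + x ^+ (2 ^ m).
  by rewrite (c2_frobD h2) -exprM -expnD hq addrC.
have := hker _ hw.
rewrite (NN_add h2) (NN_frob h2 _ hC hD) Nx expr0n expn_eq0 addr0 => /(_ erefl).
move/(c2_addeq h2) => E.
by move: hx; rewrite -E eqxx.
Qed.

Lemma Rfinal (F : finFieldType) (h2 : 2%:R = 0 :> F) m (C D : F) :
  (0 < m)%N -> #|F| = ((2 ^ m) ^ 2)%N -> C ^+ (2 ^ m) = C -> D ^+ (2 ^ m) = D -> D != 0 ->
  (forall t, t ^+ (2 ^ m) = t -> NN C D t = 0 -> t = 0) ->
  forall t, t ^+ (2 ^ m) = t -> RG (fun j => Sh C D (m + j)) m (NN C D t) = t.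
Proof.
move=> m0 hcard hC hD hD0 hker t ht.
have [e1 e2 _] := key h2 m0 hcard hC hD hD0 hker.
have hy := NNFq h2 hC hD ht.
have r1 := Rem h2 C D m t.
have r2 := Rem h2 C D (m + m) t.
rewrite ht in r1.
rewrite expnD exprM ht ht (Qshift h2) (QQFq h2 hC hD hy) e1 e2 in r2.
have : t = t + RG (fun j => Sh C D (m + j)) m (NN C D t) + t.
  by rewrite [X in X + _ + _]r1 {1}r2; ring.
by rewrite addrAC (c2_addxx h2) add0r => <-.
Qed.

Lemma coef (F : fieldType) (h2 : 2%:R = 0 :> F) m (C D : F) i :
  (i < m)%N -> D != 0 -> C ^+ (2 ^ m) = C -> D ^+ (2 ^ m) = D ->
  Sh C D m.+1 + bb C D m = 1 ->
  (D ^+ (2 ^ i) * Sh C D (m - 1 - i) ^+ (2 ^ i.+1) + D ^ (1 - (2 ^ i)%:Z) * Sh C D i.+1)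
    * D^-1 ^+ (2 ^ i) = Sh C D (m + (m - i.+1)) ^+ (2 ^ i.+1).
Proof.
move=> im hD0 hC hD htau.
have hn : (m - 1 - i = m - i.+1)%N by lia.
rewrite hn.
set n := (m - i.+1)%N.
have hnk : (n + i.+1 = m)%N by rewrite /n; lia.
have [s1 s2] := shift h2 C D n i.+1.
have [s3 _] := shift h2 C D n.+1 i.+1.
have [s4 _] := shift h2 C D m n.
have hdet := detS h2 C D n.
rewrite hnk in s1 s2.
rewrite addSn hnk in s3.
set u := Sh C D n ^+ (2 ^ i.+1) in s1 s2 *.
set v := bb C D n ^+ (2 ^ i.+1) in s1 s2.
set w := Sh C D n.+1 ^+ (2 ^ i.+1) in s3.
set z := bb C D n.+1 ^+ (2 ^ i.+1) in s3.
have hd : w * v + z * u = D / D ^+ (2 ^ i.+1).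
  have H := congr1 (fun x => x ^+ (2 ^ i.+1)) hdet; simpl in H.
  rewrite [D ^+ (2 ^ n) ^+ _]exprXX hnk hD in H.
  rewrite exprMn (c2_frobD h2) [(Sh _ _ n.+1 * _) ^+ _]exprMn [(bb _ _ n.+1 * _) ^+ _]exprMn in H.
  rewrite -/u -/v -/w -/z in H.
  by apply: (mulIf (expf_neq0 (2 ^ i.+1) hD0)); rewrite H divfK // expf_neq0.
have hs : Sh C D (m + n) ^+ (2 ^ i.+1) = Sh C D m * w + bb C D m * u.
  rewrite s4 (c2_frobD h2) !exprMn !exprXX hnk.
  by rewrite (ShFq h2 hC hD) (bbFq h2 hC hD).
rewrite hs.
have hz : D ^ (1 - (2 ^ i)%:Z) * D^-1 ^+ (2 ^ i) = D / D ^+ (2 ^ i.+1).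
  rewrite expfzDr // expr1z -exprnN exprVn -mulrA -invfM -exprD addnn -mul2n -expnS.
  by [].
have hA : D ^+ (2 ^ i) * D^-1 ^+ (2 ^ i) = 1 by rewrite -exprMn divff // expr1n.
rewrite mulrDl mulrAC hA mul1r [_ * Sh C D i.+1 * _]mulrAC hz -hd.
rewrite s1 s2 -{1}[u]mulr1 -htau s3 s2.
apply: (c2_eq h2 (e := u * z * Sh C D i.+1)); ring.
Qed.

Lemma trP (F : fieldType) (h2 : 2%:R = 0 :> F) m (b dl s : F) :
  (forall x : F, x ^+ (2 ^ m) ^+ (2 ^ m) = x) -> b ^+ (2 ^ m) = b -> s ^+ (2 ^ m) = s ->
  b * (s + dl) ^+ (2 * 2 ^ m + 3) + (b * (s + dl) ^+ (2 * 2 ^ m + 3)) ^+ (2 ^ m)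
  = b * (dl + dl ^+ (2 ^ m)) * (s ^+ 4 + (dl + dl ^+ (2 ^ m)) ^+ 2 * s ^+ 2)
    + b * dl ^+ (2 * 2 ^ m + 2) * (dl + dl ^+ (2 ^ m)).
Proof.
move=> hqq hb hs.
have hu : (s + dl) ^+ (2 ^ m) = s + dl ^+ (2 ^ m) by rewrite (c2_frobD h2) hs.
have e1 : forall y : F, y ^+ (2 * 2 ^ m + 3) = (y ^+ (2 ^ m)) ^+ 2 * y ^+ 3.
  by move=> y; rewrite exprD exprM exprAC.
have e2 : forall y : F, y ^+ (2 * 2 ^ m + 2) = (y ^+ (2 ^ m)) ^+ 2 * y ^+ 2.
  by move=> y; rewrite exprD exprM exprAC.
rewrite !e1 e2 exprMn hb exprMn [(_ ^+ 2) ^+ _]exprAC [(_ ^+ 3) ^+ _]exprAC hqq hu.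
set t := dl ^+ (2 ^ m).
apply: (c2_eq h2 (e := b * ((s * (s ^+ 2 + s * (dl + t) + dl * t) ^+ 2)
   + (dl + t) * (s ^+ 3 * (dl + t) + s ^+ 2 * (dl * t) + s * (dl + t) * (dl * t))))).
ring.
Qed.

Unset Implicit Arguments. Set Strict Implicit.

Theorem theorem3p12 (F : finFieldType) (m : nat) (b delta : F) :
  (0 < m)%N ->
  #|F| = ((2 ^ m) ^ 2)%N ->
  b ^+ (2 ^ m) = b -> b != 0 ->
  delta ^+ (2 ^ m) != delta ->
  let q := (2 ^ m)%N in
  let A := b * Tr q delta in
  let B := b * delta ^+ (2 * q + 2) * Tr q delta in
  let C := Tr q delta ^+ 2 in
  let D := A^-1 in
  let P := fun x : F => b * (x ^+ q + x + delta) ^+ (2 * q + 3) + x in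
  let Pinv := fun x : F =>
    x + b * (delta + \sum_(i < m)
       (D ^+ (2 ^ i) * Sh C D (m - 1 - i) ^+ (2 ^ i.+1)
          + D ^ (1 - (2 ^ i)%:Z) * Sh C D i.+1)
       * (x ^+ q + x + B) ^+ (2 ^ i)) ^+ (2 * q + 3) in
  bijective P ->
  forall c : F, P (Pinv c) = c /\ Pinv (P c) = c.
Proof.
move=> m0 hcard hbq hb0 hdq q A B C D P Pinv hbij.
have h2 : (2%:R : F) = 0.
  apply: pcharf0; apply: (card_finPcharP (n := (m * 2)%N)) => //.
  by rewrite hcard expnM.
have hqq : forall x : F, x ^+ (2 ^ m) ^+ (2 ^ m) = x.
  by move=> x; rewrite -exprM -{2}(expn1 (2 ^ m)) -expnS -hcard expf_card.
pose T := delta + delta ^+ (2 ^ m).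
have hT : Tr q delta = T by [].
have hTq : T ^+ (2 ^ m) = T by rewrite /T (c2_frobD h2) hqq addrC.
have hT0 : T != 0.
  apply/negP => /eqP /(c2_addeq h2) E.
  by move: hdq; rewrite -E eqxx.
have hAq : A ^+ (2 ^ m) = A by rewrite /A hT fqM.
have hA0 : A != 0 by rewrite /A hT mulf_neq0.
have hDq : D ^+ (2 ^ m) = D by rewrite /D exprVn hAq.
have hD0 : D != 0 by rewrite /D invr_neq0.
have hCq : C ^+ (2 ^ m) = C by rewrite /C hT fqX.
have hAD : A * D = 1 by rewrite /D divff.
have hTr : forall s, s ^+ (2 ^ m) = s ->
    b * (s + delta) ^+ (2 * q + 3) + (b * (s + delta) ^+ (2 * q + 3)) ^+ q
    = A * (NN C D s) + s + B.
  move=> s hs; rewrite /q (trP h2 _ hqq hbq hs) /A /C /B hT /NN -/T.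
  have hbT : b * T * D = 1 by rewrite -hAD /A hT.
  rewrite [in RHS]mulrDr [b * T * (D * s)]mulrA hbT mul1r /q.
  by apply: (c2_eq h2 (e := - s)); ring.
have hker : forall t, t ^+ (2 ^ m) = t -> NN C D t = 0 -> t = 0.
  move=> t ht hN.
  pose x2 := b * (delta ^+ (2 * q + 3) + (t + delta) ^+ (2 * q + 3)).
  have h00 : (0 : F) ^+ (2 ^ m) = 0 by rewrite expr0n expn_eq0.
  have hN0 : NN C D 0 = 0 by rewrite /NN; ring.
  have h0 := hTr 0 h00; rewrite hN0 mulr0 !add0r in h0.
  have := hTr t ht; rewrite hN mulr0 add0r => h1.
  have htr : x2 ^+ q + x2 = t.
    have -> : x2 ^+ q + x2 = (b * (0 + delta) ^+ (2 * q + 3) + (b * (0 + delta) ^+ (2 * q + 3)) ^+ q)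
       + (b * (t + delta) ^+ (2 * q + 3) + (b * (t + delta) ^+ (2 * q + 3)) ^+ q).
      by rewrite /x2 add0r mulrDr (c2_frobD h2); ring.
    rewrite add0r h0 h1; apply: (c2_eq h2 (e := B)); ring.
  have hP : P x2 = P 0.
    rewrite /P htr expr0n expn_eq0 !add0r addr0 /x2.
    by apply: (c2_eq h2 (e := b * (t + delta) ^+ (2 * q + 3))); ring.
  have := bij_inj hbij hP; rewrite /x2 => hx0.
  by rewrite -htr -/x2 /x2 hx0 expr0n expn_eq0 addr0.
have [_ _ htau] := key h2 m0 hcard hCq hDq hD0 hker.
have hinv : forall x, Pinv (P x) = x.
  move=> x.
  pose t := x ^+ q + x.
  have ht : t ^+ (2 ^ m) = t by rewrite /t (c2_frobD h2) hqq addrC.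
  have hPx : P x ^+ q + P x + B = A * NN C D t.
    rewrite /P -/t (c2_frobD h2).
    have := hTr t ht => E.
    apply: (c2_eq h2 (e := t + B)).
    transitivity ((b * (t + delta) ^+ (2 * q + 3) + (b * (t + delta) ^+ (2 * q + 3)) ^+ q)
       + t + B); first by rewrite /t; ring.
    by rewrite E; ring.
  have hS : \sum_(i < m) (D ^+ (2 ^ i) * Sh C D (m - 1 - i) ^+ (2 ^ i.+1)
          + D ^ (1 - (2 ^ i)%:Z) * Sh C D i.+1) * (P x ^+ q + P x + B) ^+ (2 ^ i) = t.
    rewrite hPx.
    have hA : A = D^-1 by rewrite /D invrK.
    rewrite -{2}(Rfinal h2 m0 hcard hCq hDq hD0 hker ht) (RGclosed h2).
    apply: eq_bigr => i _.
    by rewrite exprMn mulrA hA (coef h2 (ltn_ord i) hD0 hCq hDq htau).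
  rewrite /Pinv hS /P -/t.
  rewrite [delta + t]addrC.
  by apply: (c2_eq h2 (e := b * (t + delta) ^+ (2 * q + 3))); ring.
move=> c; split; last exact: hinv.
have [g _ Kg] := hbij.
by rewrite -(Kg c) hinv.
Qed.
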